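(* Let $m=2$ attributes take values in $\{1,\dots,d\}$, let $\mathcal{Z}^{\mathsf{train}}\subseteq\{1,\dots,d\}^2$, and consider the graph on $\mathcal{Z}^{\mathsf{train}}$ in which two attribute vectors are adjacent iff their Hamming distance is one. Let $C_1,\dots,C_K$ be the maximal connected components of this graph, so $\mathcal{Z}^{\mathsf{train}}=C_1\cup\dots\cup C_K$. Then: (i) if a connected component $C$ is contiguous, then $\mathsf{DAff}(C)$ equals the smallest subgrid containing $C$; (ii) if $C_1,\dots,C_K$ are all contiguous, then $\mathsf{DAff}(C_1\cup\dots\cup C_K)$ equals the union over $j$ of the smallest subgrids containing $C_j$.
   Context: For $z=(z_1,z_2)$, $\sigma(z)\in\{0,1\}^{2d}$ is the concatenation of the one-hot encodings of $z_1,z_2$, and for finite $\mathcal{A}=\{z^{(1)},\dots,z^{(k)}\}\subseteq\{1,\dots,d\}^2$, $\mathsf{DAff}(\mathcal{A})=\{z\in\{1,\dots,d\}^2:\exists\alpha\in\mathbb{R}^k,\ \sum_i\alpha_i=1,\ \sigma(z)=\sum_i\alpha_i\sigma(z^{(i)})\}$. A set $C$ is contiguous if for each coordinate $j\in\{1,2\}$, with $\min_j,\max_j$ the smallest and largest values of the $j$-th coordinate over $C$, every value in $\{\min_j,\min_j+1,\dots,\max_j\}$ is taken by the $j$-th coordinate of some point of $C$. The smallest subgrid containing such $C$ is $\{\min_1,\dots,\max_1\}\times\{\min_2,\dots,\max_2\}$. *)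

(* Defs.v *)
From HB Require Import structures.
From mathcomp Require Import all_boot all_order all_algebra.
From mathcomp Require Import reals.
Set Implicit Arguments. Unset Strict Implicit. Unset Printing Implicit Defensive.
Import Order.TTheory GRing.Theory Num.Theory.

(* Attribute values {1,...,d} are represented by 'I_d = {0,...,d-1}
   (value v+1 <-> ordinal v). Attribute vectors: 'I_d * 'I_d. *)
Notation grid d := ('I_d * 'I_d)%type.

Section Defs.
Variable d : nat.

Definition onehot (R : realType) (v : 'I_d) : 'rV[R]_d :=
  \row_(j < d) ((j == v)%:R)%R.

Definition sigma (R : realType) (z : grid d) : 'rV[R]_(d + d) :=
  row_mx (onehot R z.1) (onehot R z.2).

Definition DAff (R : realType) (A : {set grid d}) (z : grid d) : Prop :=
  exists alpha : grid d -> R,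
    (\sum_(a in A) alpha a = 1)%R /\
    sigma R z = (\sum_(a in A) alpha a *: sigma R a)%R.

Definition ham1 (z w : grid d) : bool :=
  ((z.1 == w.1) && (z.2 != w.2)) || ((z.1 != w.1) && (z.2 == w.2)).

Definition zrel (Z : {set grid d}) : rel (grid d) :=
  fun z w => [&& z \in Z, w \in Z & ham1 z w].

Definition is_component (Z C : {set grid d}) : Prop :=
  exists2 x, x \in Z & C = [set y | connect (zrel Z) x y].

Definition cmin (f : grid d -> 'I_d) (C : {set grid d}) : nat :=
  \big[minn/d]_(a in C) (f a : nat).
Definition cmax (f : grid d -> 'I_d) (C : {set grid d}) : nat :=
  \max_(a in C) (f a : nat).

Definition contiguous_along (f : grid d -> 'I_d) (C : {set grid d}) : Prop :=
  forall v : nat, cmin f C <= v <= cmax f C ->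
    exists2 a, a \in C & (f a : nat) = v.

Definition contiguous (C : {set grid d}) : Prop :=
  contiguous_along fst C /\ contiguous_along snd C.

Definition subgrid (C : {set grid d}) : {set grid d} :=
  [set z : grid d | (cmin fst C <= z.1 <= cmax fst C)
                  && (cmin snd C <= z.2 <= cmax snd C)].

End Defs.

(* Main.v *)
Require Import Defs.
From HB Require Import structures.
From mathcomp Require Import all_boot all_order all_algebra.
From mathcomp Require Import reals.
Set Implicit Arguments. Unset Strict Implicit. Unset Printing Implicit Defensive.
Import Order.TTheory GRing.Theory Num.Theory.

Lemma minle (I : eqType) (s : seq I) (P : pred I) (F : I -> nat) d c :
  c \in s -> P c -> \big[minn/d]_(i <- s | P i) F i <= F c.
Proof.
elim: s => [|x s IH] //=; rewrite inE big_cons => /orP[/eqP<-|cs] Pc.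
  by rewrite Pc geq_minl.
case: (P x); last exact: IH.
by rewrite (leq_trans (geq_minr _ _)) ?IH.
Qed.

Section Proofs.
Variable R : realType.
Variable d : nat.
Local Open Scope ring_scope.

Lemma cmin_le (f : grid d -> 'I_d) (C : {set grid d}) c : c \in C -> (cmin f C <= f c)%N.
Proof. by move=> cC; rewrite /cmin minle ?mem_index_enum. Qed.

Lemma cmax_ge (f : grid d -> 'I_d) (C : {set grid d}) c : c \in C -> (f c <= cmax f C)%N.
Proof. by move=> cC; rewrite /cmax (@leq_bigmax_cond _ (mem C) (fun a : grid d => (f a : nat)) c cC). Qed.

Lemma sigmaL (z : grid d) j : sigma R z 0 (lshift d j) = (j == z.1)%:R.
Proof. by rewrite /sigma row_mxEl mxE. Qed.

Lemma sigmaR (z : grid d) j : sigma R z 0 (rshift d j) = (j == z.2)%:R.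
Proof. by rewrite /sigma row_mxEr mxE. Qed.

Lemma sum_ind (P : pred 'I_d) x : \sum_(j | P j) ((j == x)%:R : R) = (P x)%:R.
Proof.
case Px: (P x).
  rewrite (bigD1 x) //= eqxx big1 ?addr0 // => j /andP[_ /negbTE ->] //.
by rewrite big1 // => j Pj; case: eqP => // e; rewrite -e Pj in Px.
Qed.

Lemma daff_funct (A : {set grid d}) z (P Q : pred 'I_d) :
  (forall a, a \in A -> P a.1 = Q a.2) -> DAff R A z -> P z.1 = Q z.2.
Proof.
move=> H [al [H1 H2]].
have eL j : (j == z.1)%:R = \sum_(a in A) al a * (j == a.1)%:R :> R.
  by rewrite -sigmaL H2 summxE; apply: eq_bigr => a _; rewrite mxE sigmaL.
have eR j : (j == z.2)%:R = \sum_(a in A) al a * (j == a.2)%:R :> R.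
  by rewrite -sigmaR H2 summxE; apply: eq_bigr => a _; rewrite mxE sigmaR.
have : (P z.1)%:R = (Q z.2)%:R :> R.
  rewrite -!sum_ind (eq_bigr _ (fun j _ => eL j)) (eq_bigr _ (fun j _ => eR j)).
  rewrite exchange_big /= [in RHS]exchange_big /=.
  apply: eq_bigr => a aA; rewrite -!mulr_sumr !sum_ind H //.
by move/eqP; rewrite eqr_nat; case: (P z.1); case: (Q z.2).
Qed.

Lemma daff_mem (A : {set grid d}) u : u \in A -> DAff R A u.
Proof.
move=> uA; exists (fun a => (a == u)%:R); split.
  by rewrite (bigD1 u) //= eqxx big1 ?addr0 // => a /andP[_ /negbTE ->].
rewrite (bigD1 u) //= eqxx scale1r big1 ?addr0 // => a /andP[_ /negbTE ->].
by rewrite scale0r.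
Qed.

Lemma daff_aff (A : {set grid d}) z z1 z2 z3 :
  DAff R A z1 -> DAff R A z2 -> DAff R A z3 ->
  sigma R z = sigma R z1 - sigma R z2 + sigma R z3 -> DAff R A z.
Proof.
move=> [a1 [s1 e1]] [a2 [s2 e2]] [a3 [s3 e3]] Hz.
exists (fun a => a1 a - a2 a + a3 a); split.
  by rewrite big_split /= sumrB s1 s2 s3 subrr add0r.
rewrite Hz e1 e2 e3 -sumrB -big_split; apply: eq_bigr => a _.
by rewrite scalerDl scalerBl.
Qed.

Lemma daff_sub (A B : {set grid d}) z : A \subset B -> DAff R A z -> DAff R B z.
Proof.
move=> /subsetP sAB [al [s e]].
exists (fun a => if a \in A then al a else 0); split.
  rewrite -big_mkcondr /= -s; apply: eq_bigl => a.
  by case aA: (a \in A); rewrite ?andbT ?andbF // sAB.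
rewrite e; symmetry.
rewrite (eq_bigr (fun a => if a \in A then al a *: sigma R a else 0)); last first.
  by move=> a _; case: ifP; rewrite ?scale0r.
rewrite -big_mkcondr /=; apply: eq_bigl => a.
by case aA: (a \in A); rewrite ?andbT ?andbF // sAB.
Qed.

Lemma zrel_sym (Z : {set grid d}) : symmetric (zrel Z).
Proof.
move=> p q; rewrite /zrel /ham1 andbCA; congr (_ && (_ && _)).
by rewrite (eq_sym q.1) (eq_sym q.2).
Qed.

Lemma connect_in (Z : {set grid d}) a c :
  a \in Z -> connect (zrel Z) a c -> c \in Z.
Proof.
move=> aZ /connectP[p pth ->]; elim: p a aZ pth => [|y p IH] a aZ //=.
by case/andP => /and3P[_ yZ _] pth; exact: IH.
Qed.

Lemma daff_path (Z C : {set grid d}) x :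
  C = [set y | connect (zrel Z) x y] ->
  forall u v, u \in C -> v \in C -> DAff R C (u.1, v.2).
Proof.
move=> defC u v uC vC.
have : connect (zrel Z) u v.
  move: uC vC; rewrite defC !inE => uC vC.
  by apply: (connect_trans _ vC); rewrite (sym_connect_sym (@zrel_sym Z)).
case/connectP => p pth ->.
suff: forall p w, w \in C -> DAff R C (u.1, w.2) -> path (zrel Z) w p ->
        DAff R C (u.1, (last w p).2).
  by move=> /(_ p u uC); apply => //; case: u uC {pth} => ? ? ?; exact: daff_mem.
elim=> [|y q IH] w wC Hw //=; case/andP => e qth.
have yC : y \in C.
  by move: wC; rewrite defC !inE => wC; apply: connect_trans wC (connect1 e).
apply: IH => //.
move: e; rewrite /zrel /ham1 => /and3P[_ _ /orP[/andP[/eqP e1 _]|/andP[_ /eqP e2]]].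
  apply: (daff_aff Hw (daff_mem wC) (daff_mem yC)).
  rewrite /sigma /= opp_row_mx !add_row_mx e1 subrK.
  by rewrite subrr add0r.
by rewrite -e2.
Qed.

Lemma in_comp (Z C : {set grid d}) a b c :
  a \in Z -> C = [set y | connect (zrel Z) a y] ->
  b \in Z -> c \in C -> (c.1 == b.1) || (c.2 == b.2) -> b \in C.
Proof.
move=> aZ defC bZ cC h.
case: (eqVneq c b) => [<- //|ne].
have cZ : c \in Z by move: cC; rewrite defC inE; exact: connect_in.
move: cC; rewrite defC !inE => cC; apply: connect_trans cC (connect1 _).
rewrite /zrel cZ bZ /ham1 /=.
case/orP: h => h; rewrite h /= ?andbT ?andbF ?orbF /=.
  apply: contraNneq ne => e2; apply/eqP.
  by case: c b h e2 {cZ bZ} => [? ?] [? ?] /= /eqP -> ->.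
apply: contraNneq ne => e2; apply/eqP.
by case: c b h e2 {cZ bZ} => [? ?] [? ?] /= /eqP -> ->.
Qed.

End Proofs.

Theorem theorem9 (R : realType) (d : nat) (Ztrain : {set grid d}) :
  (forall C : {set grid d}, is_component Ztrain C -> contiguous C ->
     forall z : grid d, DAff R C z <-> z \in subgrid C) /\
  ((forall C : {set grid d}, is_component Ztrain C -> contiguous C) ->
     forall z : grid d, DAff R Ztrain z <->
       exists2 C : {set grid d}, is_component Ztrain C & z \in subgrid C).
Proof.
have P1 : forall C : {set grid d}, is_component Ztrain C -> contiguous C ->
     forall z : grid d, DAff R C z <-> z \in subgrid C.
  move=> C [x xZ defC] [c1 c2] z; split.
    move=> Hz.
    have h1 := @daff_funct R d C z (fun j => [exists c in C, c.1 == j]) predT.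
    have h2 := @daff_funct R d C z predT (fun j => [exists c in C, c.2 == j]).
    case/existsP: (h1 (fun a aC => introT existsP (ex_intro _ a (introT andP (conj aC (eqxx _))))) Hz)
      => a /andP[aC /eqP ea].
    case/existsP: (esym (h2 (fun a aC => esym (introT existsP (ex_intro _ a (introT andP (conj aC (eqxx _)))))) Hz))
      => b /andP[bC /eqP eb].
    rewrite inE -ea -eb.
    by rewrite (cmin_le fst aC) (cmax_ge fst aC) (cmin_le snd bC) (cmax_ge snd bC).
  rewrite inE => /andP[/andP[l1 u1] /andP[l2 u2]].
  have [a aC ea] := c1 _ (introT andP (conj l1 u1)).
  have [b bC eb] := c2 _ (introT andP (conj l2 u2)).
  have -> : z = (a.1, b.2).
    by case: z ea eb {l1 u1 l2 u2} => z1 z2 /= ea eb; congr pair; apply: val_inj.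
  exact: daff_path defC a b aC bC.
split=> // Hall z; split.
  move=> Hz.
  have h1 := @daff_funct R d Ztrain z (fun j => [exists c in Ztrain, c.1 == j]) predT.
  case/existsP: (h1 (fun a aC => introT existsP (ex_intro _ a (introT andP (conj aC (eqxx _))))) Hz)
      => a /andP[aZ /eqP ea].
  set C := [set y | connect (zrel Ztrain) a y].
  have aC : a \in C by rewrite inE connect0.
  have h2 := @daff_funct R d Ztrain z (fun j => [exists c in C, c.1 == j])
                (fun j => [exists c in C, c.2 == j]).
  have key : forall b, b \in Ztrain ->
      [exists c in C, c.1 == b.1] = [exists c in C, c.2 == b.2].
    move=> b bZ.
    have -> : [exists c in C, c.1 == b.1] = (b \in C).
      apply/existsP/idP => [[c /andP[cC e]]|bC].
        by apply: (in_comp aZ (erefl C) bZ cC); rewrite e.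
      by exists b; rewrite bC eqxx.
    apply/idP/existsP => [bC|[c /andP[cC e]]].
      by exists b; rewrite bC eqxx.
    by apply: (in_comp aZ (erefl C) bZ cC); rewrite e orbT.
  have := h2 key Hz.
  have -> : [exists c in C, c.1 == z.1] by apply/existsP; exists a; rewrite aC ea eqxx.
  case/esym/existsP => b /andP[bC /eqP eb].
  exists C; first by exists a.
  rewrite inE -ea -eb.
  by rewrite (cmin_le fst aC) (cmax_ge fst aC) (cmin_le snd bC) (cmax_ge snd bC).
case=> C hC Hz.
have := (P1 C hC (Hall C hC) z).2 Hz.
apply: daff_sub; case: hC => x xZ ->; apply/subsetP => y; rewrite inE.
exact: connect_in.
Qed.
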